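(* Let $\mathbf W\succ0$ be symmetric $n\times n$ and $\mathbf S\sim\mathcal D$ a random matrix in $\mathbb{R}^{n\times\tau}$. For any $\mathbf M,\mathbf N\in\mathbb{R}^{d\times n}$ and any realization of $\mathbf S$, $$\|\mathbf M(\mathbf I-\Pi_{\mathbf S})+\mathbf N\Pi_{\mathbf S}\|_{\mathbf W^{-1}}^2=\|\mathbf M(\mathbf I-\Pi_{\mathbf S})\|_{\mathbf W^{-1}}^2+\|\mathbf N\Pi_{\mathbf S}\|_{\mathbf W^{-1}}^2,$$ and $\mathbb{E}_{\mathcal D}\|\mathbf N\Pi_{\mathbf S}\|_{\mathbf W^{-1}}^2=\|\mathbf N\|^2_{\mathbb{E}_{\mathcal D}[\mathbf H_{\mathbf S}]}$. Furthermore, $$\mathbb{E}_{\mathcal D}\|\mathbf M(\mathbf I-\Pi_{\mathbf S})+\mathbf N\Pi_{\mathbf S}\|_{\mathbf W^{-1}}^2\le(1-\kappa)\|\mathbf M\|_{\mathbf W^{-1}}^2+\|\mathbf N\|^2_{\mathbb{E}_{\mathcal D}[\mathbf H_{\mathbf S}]}.$$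
   Context: $\Pi_{\mathbf S}=\mathbf S(\mathbf S^\top\mathbf W\mathbf S)^\dagger\mathbf S^\top\mathbf W$, $\mathbf H_{\mathbf S}=\mathbf S(\mathbf S^\top\mathbf W\mathbf S)^\dagger\mathbf S^\top$. For a symmetric positive semidefinite $\mathbf B$, $\|\mathbf X\|_{\mathbf B}^2=\mathrm{Tr}(\mathbf X\mathbf B\mathbf X^\top)$; in particular $\|\mathbf X\|_{\mathbf W^{-1}}^2=\mathrm{Tr}(\mathbf X\mathbf W^{-1}\mathbf X^\top)$. $\kappa=\lambda_{\min}(\mathbb{E}_{\mathcal D}[\Pi_{\mathbf S}])$ (equivalently $\lambda_{\min}(\mathbf W^{1/2}\mathbb{E}[\mathbf H_{\mathbf S}]\mathbf W^{1/2})$). *)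

(* Defs.v *)
From HB Require Import structures.
From mathcomp Require Import all_boot all_order all_algebra.
From mathcomp Require Import boolp classical_sets reals ereal measure lebesgue_measure lebesgue_integral probability.
Set Implicit Arguments. Unset Strict Implicit. Unset Printing Implicit Defensive.
Import Order.TTheory GRing.Theory Num.Theory.
Local Open Scope ring_scope.

Definition penrose (R : realType) (m k : nat) (A : 'M[R]_(m, k)) (X : 'M[R]_(k, m)) :=
  [/\ A *m X *m A = A, X *m A *m X = X, (A *m X)^T = A *m X & (X *m A)^T = X *m A].

(* Moore-Penrose pseudoinverse A^dagger (chosen via the Penrose conditions;
   it exists and is unique). *)
Definition pinv (R : realType) (m k : nat) (A : 'M[R]_(m, k)) : 'M[R]_(k, m) :=
  match pselect (exists X, penrose A X) with
  | left h => proj1_sig (cid h)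
  | right _ => 0
  end.

Definition spd (R : realType) (n : nat) (W : 'M[R]_n) :=
  W^T = W /\ forall x : 'rV[R]_n, x != 0 -> 0 < (x *m W *m x^T) 0 0.

Definition PiS (R : realType) (n tau : nat) (W : 'M[R]_n) (S : 'M[R]_(n, tau)) : 'M[R]_n :=
  S *m pinv (S^T *m W *m S) *m S^T *m W.
Definition HS (R : realType) (n tau : nat) (W : 'M[R]_n) (S : 'M[R]_(n, tau)) : 'M[R]_n :=
  S *m pinv (S^T *m W *m S) *m S^T.

Definition sqnormB (R : realType) (d n : nat) (B : 'M[R]_n) (X : 'M[R]_(d, n)) : R :=
  \tr (X *m B *m X^T).

Definition Emx (dT : measure_display) (T : measurableType dT) (R : realType)
  (P : probability T R) (m k : nat) (F : T -> 'M[R]_(m, k)) : 'M[R]_(m, k) :=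
  \matrix_(i, j) fine (\int[P]_w (F w i j)%:E)%E.

Definition lambda_min (R : realType) (n : nat) (A : 'M[R]_n) : R :=
  inf [set a : R | eigenvalue A a].

(* Main.v *)
Require Import Defs.
From HB Require Import structures.
From mathcomp Require Import all_boot all_order all_algebra.
From mathcomp Require Import boolp classical_sets reals ereal measure lebesgue_measure lebesgue_integral probability.
From mathcomp Require Import ring lra.
From mathcomp Require Import topology normedtype derive matrix_normedtype.
Set Implicit Arguments. Unset Strict Implicit. Unset Printing Implicit Defensive.
Import Order.TTheory GRing.Theory Num.Theory.
Import numFieldTopology.Exports numFieldNormedType.Exports.
Local Open Scope ring_scope.

Section Alg.
Variable R : realType.

Lemma penrose_uniq k (A X Y : 'M[R]_k) : penrose A X -> penrose A Y -> X = Y.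
Proof.
move=> [h1 h2 h3 h4] [g1 g2 g3 g4].
have f1 : A *m X = X^T *m A^T by rewrite -trmx_mul h3.
have f2 : A *m Y = Y^T *m A^T by rewrite -trmx_mul g3.
have f3 : X *m A = A^T *m X^T by rewrite -trmx_mul h4.
have f4 : Y *m A = A^T *m Y^T by rewrite -trmx_mul g4.
have eX : X = X *m A *m Y.
  transitivity (X *m (X^T *m A^T)); first by rewrite -f1 mulmxA h2.
  transitivity (X *m (X^T *m (A^T *m Y^T *m A^T))).
    by rewrite -!trmx_mul mulmxA g1.
  transitivity (X *m (A *m X) *m (A *m Y)); first by rewrite f1 f2 !mulmxA.
  by rewrite !mulmxA h2.
have eY : Y = X *m A *m Y.
  transitivity (A^T *m Y^T *m Y); first by rewrite -f4 g2.
  transitivity (A^T *m X^T *m A^T *m Y^T *m Y).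
    by rewrite -{1}h1 !trmx_mul !mulmxA.
  transitivity (X *m A *m (Y *m A) *m Y); first by rewrite f3 f4 !mulmxA.
  by rewrite -mulmxA g2.
by rewrite eX -eY.
Qed.

Lemma penrose_tr k (A X : 'M[R]_k) : A^T = A -> penrose A X -> penrose A X^T.
Proof.
move=> sA [h1 h2 h3 h4]; split.
- by move: (congr1 trmx h1); rewrite !trmx_mul sA mulmxA.
- by move: (congr1 trmx h2); rewrite !trmx_mul sA mulmxA.
- by rewrite trmx_mul trmxK sA -{2}sA -trmx_mul h4.
- by rewrite trmx_mul trmxK sA -{2}sA -trmx_mul h3.
Qed.

Lemma pinv_props k (A : 'M[R]_k) : A^T = A ->
  (pinv A)^T = pinv A /\ pinv A *m A *m pinv A = pinv A.
Proof.
move=> sA; rewrite /pinv; case: pselect => [h|_]; last by split; [exact: trmx0 | rewrite !mul0mx].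
have hX := proj2_sig (cid h); move: (proj1_sig (cid h)) hX => X hX.
split; last by case: hX.
exact: penrose_uniq (penrose_tr sA hX) hX.
Qed.

Lemma trmxD m k (A B : 'M[R]_(m, k)) : (A + B)^T = A^T + B^T.
Proof. exact: raddfD. Qed.
Lemma trmxB m k (A B : 'M[R]_(m, k)) : (A - B)^T = A^T - B^T.
Proof. exact: raddfB. Qed.

Lemma trmxZ m k a (A : 'M[R]_(m, k)) : (a *: A)^T = a *: A^T.
Proof. by apply/matrixP => i j; rewrite !mxE. Qed.

Lemma sqnormB_mul d m (B : 'M[R]_m) (M : 'M[R]_(d, m)) (P : 'M[R]_m) :
  sqnormB B (M *m P) = \tr (M *m (P *m B *m P^T) *m M^T).
Proof. by rewrite /sqnormB trmx_mul !mulmxA. Qed.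

Lemma sqnorm_split d m (B : 'M[R]_m) (P Q : 'M[R]_m) (M N : 'M[R]_(d, m)) :
  P *m B *m Q^T = 0 -> Q *m B *m P^T = 0 ->
  sqnormB B (M *m P + N *m Q) = sqnormB B (M *m P) + sqnormB B (N *m Q).
Proof.
move=> h1 h2; rewrite /sqnormB trmxD mulmxDl !mulmxDr !mulmxDl !mxtraceD.
have -> : M *m P *m B *m (N *m Q)^T = 0.
  by rewrite trmx_mul -!mulmxA (mulmxA P) (mulmxA _ Q^T) h1 mul0mx mulmx0.
have -> : N *m Q *m B *m (M *m P)^T = 0.
  by rewrite trmx_mul -!mulmxA (mulmxA Q) (mulmxA _ P^T) h2 mul0mx mulmx0.
by rewrite !mxtrace0 addr0 add0r.
Qed.

Section FixedS.
Variables (n tau : nat) (W : 'M[R]_n) (S : 'M[R]_(n, tau)).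
Hypotheses (sW : W^T = W) (uW : W \in unitmx).
Local Notation V := (invmx W).
Local Notation H := (HS W S).
Local Notation Pi := (PiS W S).

Lemma V_sym : V^T = V. Proof. by rewrite trmx_inv sW. Qed.

Lemma HS_props : H^T = H /\ H *m W *m H = H.
Proof.
have sA : (S^T *m W *m S)^T = S^T *m W *m S by rewrite !trmx_mul trmxK sW mulmxA.
have [e1 e2] := pinv_props sA.
rewrite /HS; split; first by rewrite !trmx_mul trmxK e1 mulmxA.
transitivity (S *m (pinv (S^T *m W *m S) *m (S^T *m W *m S) *m pinv (S^T *m W *m S)) *m S^T).
  by rewrite !mulmxA.
by rewrite e2.
Qed.

Lemma PiE : Pi = H *m W. Proof. by []. Qed.

Lemma PiV : Pi *m V = H. Proof. by rewrite PiE mulmxK. Qed.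

Lemma VPi : V *m Pi^T = H.
Proof. by rewrite -V_sym -trmx_mul PiV (proj1 HS_props). Qed.

Lemma PiVPi : Pi *m V *m Pi^T = H.
Proof.
by rewrite PiV PiE trmx_mul sW (proj1 HS_props) mulmxA (proj2 HS_props).
Qed.

Lemma cross1 : (1%:M - Pi) *m V *m Pi^T = 0.
Proof. by rewrite mulmxBl mul1mx mulmxBl VPi PiVPi subrr. Qed.

Lemma cross2 : Pi *m V *m (1%:M - Pi)^T = 0.
Proof. by rewrite trmxB trmx1 mulmxBr mulmx1 PiVPi PiV subrr. Qed.

Lemma IPi : (1%:M - Pi) *m V *m (1%:M - Pi)^T = V - H.
Proof.
rewrite trmxB trmx1 mulmxBr mulmx1 !mulmxBl mul1mx.
by rewrite PiVPi PiV VPi subrr subr0.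
Qed.

End FixedS.

Definition quad m (B : 'M[R]_m) (x : 'rV[R]_m) : R := (x *m B *m x^T) 0 0.

Lemma bil_sym m (B : 'M[R]_m) (x z : 'rV[R]_m) : B^T = B ->
  (z *m B *m x^T) 0 0 = (x *m B *m z^T) 0 0.
Proof.
move=> sB; have e : (z *m B *m x^T)^T = x *m B *m z^T.
  by rewrite !trmx_mul trmxK sB mulmxA.
by move/(congr1 (fun M : 'M[R]_1 => M 0 0)): e; rewrite mxE.
Qed.

Lemma bil_delta m (B : 'M[R]_m) i j :
  ((delta_mx 0 i : 'rV[R]_m) *m B *m (delta_mx 0 j : 'rV[R]_m)^T) 0 0 = B i j.
Proof. by rewrite -rowE trmx_delta -colE !mxE. Qed.

Lemma quadZ m (B : 'M[R]_m) a x : quad B (a *: x) = a ^+ 2 * quad B x.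
Proof. by rewrite /quad trmxZ -!scalemxAl -scalemxAr scalerA !mxE expr2. Qed.

Lemma quad_expand m (B : 'M[R]_m) (x z : 'rV[R]_m) t : B^T = B ->
  quad B (x + t *: z) = quad B x + 2 * t * (x *m B *m z^T) 0 0 + t ^+ 2 * quad B z.
Proof.
move=> sB; have e := bil_sym x z sB.
rewrite /quad trmxD mulmxDl !mulmxDr !mulmxDl trmxZ -!scalemxAl -!scalemxAr scalerA.
rewrite !mxE in e *; rewrite e; ring.
Qed.

Lemma spd_unit m (W : 'M[R]_m) : spd W -> W \in unitmx.
Proof.
move=> [_ pW]; rewrite -row_free_unit; apply: inj_row_free => v vW.
apply/eqP; apply: contraT => /pW; by rewrite vW mul0mx mxE ltxx.
Qed.

Lemma spd_psd m (W : 'M[R]_m) x : spd W -> 0 <= quad W x.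
Proof.
move=> [_ pW]; have [->|/pW /ltW //] := eqVneq x 0.
by rewrite /quad mul0mx mul0mx mxE.
Qed.

Section FixedS2.
Variables (n tau : nat) (W : 'M[R]_n) (S : 'M[R]_(n, tau)).
Hypothesis hW : spd W.
Local Notation V := (invmx W).
Local Notation H := (HS W S).
Local Notation Pi := (PiS W S).

Let sW : W^T = W. Proof. by case: hW. Qed.
Let uW : W \in unitmx. Proof. exact: spd_unit. Qed.

Lemma quad_mul m k (B : 'M[R]_k) (x : 'rV[R]_m) (A : 'M[R]_(m, k)) :
  quad B (x *m A) = quad (A *m B *m A^T) x.
Proof. by rewrite /quad trmx_mul !mulmxA. Qed.

Lemma H_quad x : quad H x = quad W (x *m H).
Proof.
by rewrite quad_mul (proj1 (HS_props S sW)) (proj2 (HS_props S sW)).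
Qed.

Lemma V_quad x : quad V x = quad W (x *m V).
Proof. by rewrite quad_mul V_sym // mulVmx // mul1mx. Qed.

Lemma H_psd x : 0 <= quad H x.
Proof. by rewrite H_quad spd_psd. Qed.

Lemma V_psd x : 0 <= quad V x.
Proof. by rewrite V_quad spd_psd. Qed.

Lemma VmH_psd x : 0 <= quad (V - H) x.
Proof. by rewrite -IPi // -quad_mul V_psd. Qed.

Lemma H_bound i j : `|H i j| <= V i i + V j j.
Proof.
have sH := proj1 (HS_props S sW).
have e1 := quad_expand (delta_mx 0 i) (delta_mx 0 j) 1 sH.
have e2 := quad_expand (delta_mx 0 i) (delta_mx 0 j) (-1) sH.
have p1 := H_psd (delta_mx 0 i + 1 *: delta_mx 0 j).
have p2 := H_psd (delta_mx 0 i + (-1) *: delta_mx 0 j).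
have qi := VmH_psd (delta_mx 0 i); have qj := VmH_psd (delta_mx 0 j).
have hi := H_psd (delta_mx 0 i); have hj := H_psd (delta_mx 0 j).
rewrite /quad !bil_delta in e1 e2 qi qj hi hj.
rewrite /quad e1 in p1; rewrite /quad e2 in p2.

have dB (A B : 'M[R]_n) k l : (A - B) k l = A k l - B k l by rewrite !mxE.
rewrite !dB in qi qj.
rewrite ler_norml; apply/andP; split; nra.
Qed.

End FixedS2.
End Alg.

Section Exp.
Variables (R : realType) (dT : measure_display) (T : measurableType dT) (P : probability T R).

Lemma lin_sum m k (g : 'M[R]_(m, k) -> R) :
  (forall A B, g (A + B) = g A + g B) -> (forall a A, g (a *: A) = a * g A) ->
  forall X, g X = \sum_i \sum_j X i j * g (delta_mx i j).
Proof.
move=> gD gZ X.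
have g0 : g 0 = 0 by rewrite -(scale0r 0) gZ mul0r.
rewrite {1}(matrix_sum_delta X) (big_morph g gD g0); apply: eq_bigr => i _.
rewrite (big_morph g gD g0); apply: eq_bigr => j _; exact: gZ.
Qed.

Lemma E_aff m k (F : T -> 'M[R]_(m, k)) (g : 'M[R]_(m, k) -> R) (c : R) :
  (forall A B, g (A + B) = g A + g B) -> (forall a A, g (a *: A) = a * g A) ->
  (forall i j, P.-integrable setT (EFin \o (fun w => F w i j))) ->
  (\int[P]_w (c + g (F w))%:E = (c + g (Emx P F))%:E)%E.
Proof.
move=> gD gZ hF.
pose G i j := g (delta_mx i j).
transitivity (\int[P]_w (c%:E + \sum_i \sum_j ((F w i j)%:E * (G i j)%:E)))%E.
  apply: eq_integral => w _; rewrite (lin_sum gD gZ) EFinD -sumEFin.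
  congr (_ + _)%E; apply: eq_bigr => i _; rewrite -sumEFin.
  by apply: eq_bigr => j _; rewrite EFinM.
rewrite integralD //; last 2 first.
- exact: finite_measure_integrable_cst.
- apply: integrable_sum => // i _; apply: integrable_sum => // j _.
  exact: (integrableZr _ _ (hF i j)).
rewrite integral_cst // [X in (_ * X)%E](_ : _ = 1%E) ?mule1; last exact: probability_setT.
rewrite integral_sum //; last first.
  move=> i; apply: integrable_sum => // j _; exact: (integrableZr _ _ (hF i j)).
rewrite (lin_sum gD gZ (Emx P F)) EFinD -sumEFin; congr (_ + _)%E.
apply: eq_bigr => i _; rewrite integral_sum //; last first.
  move=> j; exact: (integrableZr _ _ (hF i j)).
rewrite -sumEFin; apply: eq_bigr => j _.
have -> : Emx P F i j = fine (\int[P]_w (F w i j)%:E)%E by rewrite /Emx mxE.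
rewrite integralZr //.
transitivity ((fine (\int[P]_x (F x i j)%:E))%:E * (G i j)%:E)%E; last by [].
apply: (congr1 (fun x => x * _)%E); rewrite fineK //.
  exact: (integrable_fin_num measurableT (hF i j)).
exact: hF.
Qed.

Lemma integrable_bounded (f : T -> R) (B : R) :
  measurable_fun setT f -> (forall w, `|f w| <= B) ->
  P.-integrable setT (EFin \o f).
Proof.
move=> mf hB; apply: measurable_bounded_integrable => //.
  by rewrite [X in (X < _)%E](_ : _ = 1%E) ?ltry //; exact: probability_setT.
rewrite /bounded_near; near=> M => t _ /=.
apply: le_trans (hB t) _; near: M; exact: nbhs_pinfty_ge (num_real B).
Unshelve. all: end_near. Qed.
End Exp.

Section Eig.
Local Open Scope classical_set_scope.
Variable R : realType.

Lemma cont_sum m (I : Type) (s : seq I) (f : I -> 'rV[R]_m -> R) :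
  (forall i, continuous (f i)) -> continuous (fun x => \sum_(i <- s) f i x).
Proof.
move=> hf; elim: s => [|a s IH].
  under eq_fun do rewrite big_nil; exact: cst_continuous.
under eq_fun do rewrite big_cons.
by move=> x; apply: continuousD; [exact: hf | exact: IH].
Qed.

Lemma cont_quad m (B : 'M[R]_m) : continuous (quad B).
Proof.
have -> : quad B = fun x => \sum_j (\sum_i x 0 i * B i j) * x 0 j.
  by apply: funext => x; rewrite /quad mxE; apply: eq_bigr => j _; rewrite !mxE.
apply: cont_sum => j x; apply: continuousM; last exact: coord_continuous.
apply: cont_sum => i y; apply: continuousM; first exact: coord_continuous.
exact: cst_continuous.
Qed.

Lemma quad1E m (x : 'rV[R]_m) : quad 1%:M x = \sum_i x 0 i ^+ 2.
Proof. by rewrite /quad mulmx1 mxE; apply: eq_bigr => i _; rewrite !mxE expr2. Qed.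

Lemma spd1 m : spd (1%:M : 'M[R]_m).
Proof.
split; first exact: trmx1.
move=> x x0; rewrite -/(quad 1%:M x) quad1E lt_def; apply/andP; split; last first.
  by apply: sumr_ge0 => i _; exact: sqr_ge0.
apply: contra x0 => /eqP /psumr_eq0P h; apply/eqP/rowP => i.
rewrite [RHS]mxE; apply/eqP; rewrite -sqrf_eq0; apply/eqP.
exact: (h (fun i _ => sqr_ge0 _) i isT).
Qed.

Lemma quad0 m (B : 'M[R]_m) : quad B 0 = 0.
Proof. by rewrite /quad !mul0mx mxE. Qed.

Lemma entryB m k (A B : 'M[R]_(m, k)) i j : (A - B) i j = A i j - B i j.
Proof. by rewrite !mxE. Qed.
Lemma entryZ m k a (A : 'M[R]_(m, k)) i j : (a *: A) i j = a * A i j.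
Proof. by rewrite !mxE. Qed.

Lemma gen_eig m (C W : 'M[R]_m) : (0 < m)%N -> C^T = C -> spd W ->
  exists mu, exists2 x : 'rV[R]_m, x != 0 &
    x *m C = mu *: (x *m W) /\ forall y, mu * quad W y <= quad C y.
Proof.
move=> m0 sC hW.
have sW : W^T = W by case: hW.
have qWpos : forall x, x != 0 -> 0 < quad W x by case: hW.
have q1pos : forall x : 'rV[R]_m, x != 0 -> 0 < quad 1%:M x by case: (spd1 m).
pose Sph := [set x : 'rV[R]_m | quad 1%:M x = 1].
have Sph_nz : forall x, Sph x -> x != 0.
  move=> x; rewrite /Sph /= => h; apply/eqP => x0; move: h.
  by rewrite x0 quad0 => /eqP; rewrite eq_sym oner_eq0.
pose f x := quad C x / quad W x.
have ne : Sph !=set0.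
  exists (delta_mx 0 (Ordinal m0)); rewrite /Sph /= /quad bil_delta.
  by rewrite mxE eqxx.
have cSph : compact Sph.
  have cB : compact [set v : 'rV[R]_m | forall i, `[(-1), 1]%classic (v ord0 i)].
    exact: (rV_compact (fun=> @segment_compact R (-1) 1)).
  apply: (subclosed_compact _ cB).
  - have -> : Sph = quad 1%:M @^-1` [set y | y = 1] by [].
    by apply: (proj1 (continuous_closedP _)); [exact: cont_quad | exact: closed_eq].
  - move=> x; rewrite /Sph /= quad1E => h i; rewrite /= in_itv /=.
    have hle : x 0 i ^+ 2 <= \sum_j x 0 j ^+ 2.
      rewrite (bigD1 i) //= lerDl sumr_ge0 // => j _; exact: sqr_ge0.
    rewrite h in hle; change (x 0 i) with (x ord0 i) in hle.
    by apply/andP; split; nra.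
have cf : {within Sph, continuous f}.
  apply: continuous_in_subspaceT => x; rewrite inE => xS.
  have := continuousM (@cont_quad _ C x) (continuousV _ (@cont_quad _ W x)).
  by apply; rewrite gt_eqF // qWpos // Sph_nz.
have [c cS cmin] := EVT_min_rV ne cSph cf.
have cS' : Sph c by rewrite inE in cS.
set mu := f c.
have key : forall y, mu * quad W y <= quad C y.
  move=> y; have [->|y0] := eqVneq y 0; first by rewrite !quad0 mulr0.
  pose s := Num.sqrt (quad 1%:M y).
  have s0 : 0 < s by rewrite sqrtr_gt0 q1pos.
  have yS : (s^-1 *: y) \in Sph.
    rewrite inE /Sph /= quadZ exprVn sqr_sqrtr ?mulVf //.
      by rewrite gt_eqF // q1pos.
    exact: ltW (q1pos y y0).
  have := cmin _ yS; rewrite /f !quadZ -mulf_div divff ?mul1r; last first.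
    by rewrite expf_neq0 // invr_neq0 // gt_eqF.
  by rewrite ler_pdivlMr // qWpos.
have Dsym : (C - mu *: W)^T = C - mu *: W by rewrite trmxB trmxZ sC sW.
have qD : forall y, quad (C - mu *: W) y = quad C y - mu * quad W y.
  move=> y; rewrite /quad mulmxBr mulmxBl -scalemxAr -scalemxAl.
  by rewrite entryB entryZ.
have D_psd : forall y, 0 <= quad (C - mu *: W) y.
  by move=> y; rewrite qD subr_ge0 key.
have Dc : quad (C - mu *: W) c = 0.
  rewrite qD /mu /f divfK ?subrr // gt_eqF // qWpos // Sph_nz //.
move: Dsym D_psd Dc; set D := C - mu *: W => Dsym D_psd Dc.
set z := c *m D.
have bE : (c *m D *m z^T) 0 0 = quad 1%:M z by rewrite /quad mulmx1.
have hq : forall t, 0 <= 2 * t * quad 1%:M z + t ^+ 2 * quad D z.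
  move=> t; have := D_psd (c + t *: z).
  by rewrite quad_expand // Dc add0r bE.
have z0 : z = 0.
  apply/eqP; apply: contraT => znz.
  have b0 := q1pos z znz; have a0 := D_psd z.
  move: hq b0 a0; set b := quad 1%:M z; set a := quad D z => hq b0 a0.
  have a1 : a + 1 != 0 by rewrite gt_eqF // ltr_wpDl.
  pose t := - b / (a + 1).
  have ht : t * (a + 1) = - b by rewrite /t divfK.
  have := hq t; nra.
have : c *m D = 0 := z0.
rewrite /D mulmxBr -scalemxAr => /eqP; rewrite subr_eq0 => /eqP e.
by exists mu, c; [exact: Sph_nz | split].
Qed.
End Eig.

Section Main.
Variable R : realType.

Lemma tr_quad d m (M : 'M[R]_(d, m)) (X : 'M[R]_m) :
  \tr (M *m X *m M^T) = \sum_k quad X (row k M).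
Proof.
rewrite /mxtrace; apply: eq_bigr => k _.
rewrite /quad -row_mul tr_row !mxE; apply: eq_bigr => l _; rewrite !mxE.
by [].
Qed.

Lemma quad_linD m (x : 'rV[R]_m) (A B : 'M[R]_m) : quad (A + B) x = quad A x + quad B x.
Proof. by rewrite /quad mulmxDr mulmxDl !mxE. Qed.

Lemma quad_linZ m (x : 'rV[R]_m) a (A : 'M[R]_m) : quad (a *: A) x = a * quad A x.
Proof. by rewrite /quad -scalemxAr -scalemxAl entryZ. Qed.

Lemma tr_linD d m (N : 'M[R]_(d, m)) (A B : 'M[R]_m) :
  \tr (N *m (A + B) *m N^T) = \tr (N *m A *m N^T) + \tr (N *m B *m N^T).
Proof. by rewrite mulmxDr mulmxDl mxtraceD. Qed.

Lemma tr_linZ d m (N : 'M[R]_(d, m)) a (A : 'M[R]_m) :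
  \tr (N *m (a *: A) *m N^T) = a * \tr (N *m A *m N^T).
Proof. by rewrite -scalemxAr -scalemxAl mxtraceZ. Qed.

End Main.

Theorem lemma3p8 (R : realType) (dT : measure_display) (T : measurableType dT)
  (P : probability T R) (n tau d : nat) (W : 'M[R]_n) (S : T -> 'M[R]_(n, tau))
  (M N : 'M[R]_(d, n)) :
  spd W ->
  (forall i j, measurable_fun setT (fun w => S w i j)) ->
  (forall i j, measurable_fun setT (fun w => PiS W (S w) i j)) ->
  let kappa := lambda_min (Emx P (fun w => PiS W (S w))) in
  let EH := Emx P (fun w => HS W (S w)) in
  (forall w,
     sqnormB (invmx W) (M *m (1%:M - PiS W (S w)) + N *m PiS W (S w))
     = sqnormB (invmx W) (M *m (1%:M - PiS W (S w)))
       + sqnormB (invmx W) (N *m PiS W (S w)))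
  /\ (\int[P]_w (sqnormB (invmx W) (N *m PiS W (S w)))%:E)%E = (sqnormB EH N)%:E
  /\ (\int[P]_w (sqnormB (invmx W) (M *m (1%:M - PiS W (S w)) + N *m PiS W (S w)))%:E
      <= ((1 - kappa) * sqnormB (invmx W) M + sqnormB EH N)%:E)%E.
Proof.
move=> hW _ hPi kappa EH.
have sW : W^T = W by case: hW.
have uW : W \in unitmx := spd_unit hW.
have hsplit : forall w,
     sqnormB (invmx W) (M *m (1%:M - PiS W (S w)) + N *m PiS W (S w))
     = sqnormB (invmx W) (M *m (1%:M - PiS W (S w)))
       + sqnormB (invmx W) (N *m PiS W (S w)).
  move=> w; apply: sqnorm_split; [exact: cross1 | exact: cross2].
have eN : forall w, sqnormB (invmx W) (N *m PiS W (S w)) = \tr (N *m HS W (S w) *m N^T).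
  by move=> w; rewrite sqnormB_mul PiVPi.
have eM : forall w, sqnormB (invmx W) (M *m (1%:M - PiS W (S w))) =
    \tr (M *m invmx W *m M^T) - \tr (M *m HS W (S w) *m M^T).
  move=> w; rewrite sqnormB_mul IPi // mulmxBr mulmxBl; exact: raddfB.
have hH : forall i j, P.-integrable setT (EFin \o (fun w => HS W (S w) i j)).
  move=> i j; apply: (@integrable_bounded _ _ _ P _ (invmx W i i + invmx W j j)); last first.
    by move=> w; exact: H_bound.
  have -> : (fun w => HS W (S w) i j) = (fun w => \sum_k PiS W (S w) i k * invmx W k j).
    by apply: funext => w; rewrite -PiV // mxE.
  apply: measurable_sum => k; apply: measurable_realfun.measurable_funM => //; exact: measurable_cst.
have gND := @tr_linD _ _ _ N; have gNZ := @tr_linZ _ _ _ N.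
have gMD := @tr_linD _ _ _ M; have gMZ := @tr_linZ _ _ _ M.
split => //; split.
  transitivity (\int[P]_w (0 + \tr (N *m HS W (S w) *m N^T))%:E)%E.
    by apply: eq_integral => w _; rewrite eN add0r.
  by rewrite (E_aff (F := fun w => HS W (S w)) 0 gND gNZ hH) add0r.
pose g X := \tr (N *m X *m N^T) - \tr (M *m X *m M^T).
have gD : forall A B, g (A + B) = g A + g B.
  by move=> A B; rewrite /g gND gMD; ring.
have gZ : forall a A, g (a *: A) = a * g A.
  by move=> a A; rewrite /g gNZ gMZ; ring.
have eI : (\int[P]_w (sqnormB (invmx W) (M *m (1%:M - PiS W (S w)) + N *m PiS W (S w)))%:E
   = \int[P]_w (\tr (M *m invmx W *m M^T) + g (HS W (S w)))%:E)%E.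
  apply: eq_integral => w _; rewrite hsplit eM eN /g; congr (_%:E); ring.
rewrite eI.
rewrite (E_aff (F := fun w => HS W (S w)) _ gD gZ hH) lee_fin /g.
suff : kappa * \tr (M *m invmx W *m M^T) <= \tr (M *m EH *m M^T).
  rewrite /sqnormB; lra.
have EHsym : EH^T = EH.
  apply/matrixP => i j; rewrite /EH /Emx !mxE; congr fine; apply: eq_integral => w _.
  by rewrite -[in LHS](proj1 (HS_props (S w) sW)) mxE.
have qD := fun x A B => @quad_linD R n x A B.
have qZ := fun x a A => @quad_linZ R n x a A.
have EHpsd : forall x, 0 <= quad EH x.
  move=> x.
  have h : (0 <= \int[P]_w (0 + quad (HS W (S w)) x)%:E)%E.
    by apply: integral_ge0 => w _; rewrite add0r lee_fin H_psd.
  by rewrite (E_aff (F := fun w => HS W (S w)) (g := fun X => quad X x) 0 (qD x) (qZ x) hH) add0r lee_fin in h.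
have EPi : Emx P (fun w => PiS W (S w)) = EH *m W.
  apply/matrixP => i j.
  have hgD : forall A B : 'M[R]_n, ((A + B) *m W) i j = (A *m W) i j + (B *m W) i j.
    by move=> A B; rewrite mulmxDl mxE.
  have hgZ : forall a (A : 'M[R]_n), ((a *: A) *m W) i j = a * (A *m W) i j.
    by move=> a A; rewrite -scalemxAl mxE.
  have e := E_aff (F := fun w => HS W (S w)) (g := fun X => (X *m W) i j) 0 hgD hgZ hH.
  rewrite add0r in e.
  have e' : (\int[P]_w (PiS W (S w) i j)%:E = \int[P]_w (0 + (HS W (S w) *m W) i j)%:E)%E.
    by apply: eq_integral => w _; rewrite add0r.
  rewrite /Emx mxE.
  transitivity (fine (\int[P]_w (PiS W (S w) i j)%:E)%E); first by [].
  by rewrite e' e.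
have trV : 0 <= \tr (M *m invmx W *m M^T).
  by rewrite tr_quad sumr_ge0 // => k _; exact: V_psd.
case: (posnP n) => [n0|npos].
  move: (M) (W) (EH) (kappa) => M0 W0 EH0 k0; subst n.
  by rewrite [M0]thinmx0 !mul0mx mxtrace0 mulr0.
have Csym : (W *m EH *m W)^T = W *m EH *m W by rewrite !trmx_mul sW EHsym mulmxA.
have [mu [x x0 [ex key]]] := gen_eig npos Csym hW.
have xW0 : x *m W != 0.
  apply: contra x0 => /eqP h; apply/eqP.
  by rewrite -[x]mulmx1 -(mulmxV uW) mulmxA h mul0mx.
have eig : eigenvalue (EH *m W) mu.
  apply/eigenvalueP; exists (x *m W) => //.
  by rewrite -ex !mulmxA.
have klow : kappa <= mu.
  rewrite /kappa /lambda_min EPi; apply: ge_inf => //.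
  exists 0 => a /eigenvalueP [v va v0].
  have vV0 : v *m invmx W != 0.
    apply: contra v0 => /eqP h; apply/eqP.
    by rewrite -[v]mulmx1 -(mulVmx uW) mulmxA h mul0mx.
  have qpos : 0 < quad (invmx W) v by rewrite V_quad //; case: hW => _; apply.
  have e : quad EH v = a * quad (invmx W) v.
    rewrite /quad -[in LHS](mulmx1 EH) -(mulmxV uW) !mulmxA -(mulmxA v EH W) va.
    by rewrite -!scalemxAl entryZ.
  have := EHpsd v; rewrite e => h.
  rewrite /= ; nra.
have rowk : forall y : 'rV[R]_n, mu * quad (invmx W) y <= quad EH y.
  move=> y; have := key (y *m invmx W).
  rewrite -V_quad // quad_mul.
  suff -> : invmx W *m (W *m EH *m W) *m (invmx W)^T = EH by [].
  by rewrite V_sym // !mulmxA mulVmx // mul1mx -mulmxA mulmxV // mulmx1.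
have : mu * \tr (M *m invmx W *m M^T) <= \tr (M *m EH *m M^T).
  rewrite !tr_quad mulr_sumr; apply: ler_sum => k _; exact: rowk.
apply: le_trans; exact: ler_wpM2r.
Qed.
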